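(* Let $\mathcal{X}\times\mathcal{Y}$ be a sample space, $\mathcal{H}$ a set of hypotheses $h:\mathcal{X}\to\mathcal{Y}$, $n\in\mathbb{N}$, and let $\mathcal{A}$ be a (possibly randomized) learning algorithm, i.e. a Markov kernel $\mathcal{P}_{H|S}$ from $(\mathcal{X}\times\mathcal{Y})^n$ to $\mathcal{H}$. Let $S\sim\mathcal{P}^n$ for some distribution $\mathcal{P}$ on $\mathcal{X}\times\mathcal{Y}$, let $H=\mathcal{A}(S)$, and assume the joint law $\mathcal{P}_{SH}$ satisfies $\mathcal{P}_{SH}\ll\mathcal{P}_S\mathcal{P}_H$. Let $\ell$ be the $0$-$1$ loss. Given $\eta\in(0,1)$, let $E=\{(s,h):|L_{\mathcal{P}}(h)-L_s(h)|>\eta\}$. Then for every $\alpha>1$, $$\mathbb{P}((S,\mathcal{A}(S))\in E)\le\exp\left(\frac{\alpha-1}{\alpha}\left(I_\alpha(S;\mathcal{A}(S))+\log 2-2n\eta^2\right)\right).$$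
   Context: The $0$-$1$ loss is $\ell(h,(x,y))=\mathbb{1}_{h(x)\neq y}$. The population risk is $L_{\mathcal{P}}(h)=\mathbb{E}_{(x,y)\sim\mathcal{P}}[\ell(h,(x,y))]=\mathcal{P}(\{(x,y):h(x)\ne y\})$, and for $s=((x_1,y_1),\dots,(x_n,y_n))$ the empirical risk is $L_s(h)=\frac1n\sum_{i=1}^n\ell(h,(x_i,y_i))$. Sibson's $\alpha$-mutual information is $I_\alpha(S;H)=\min_{Q_H}D_\alpha(\mathcal{P}_{SH}\|\mathcal{P}_SQ_H)$, where $D_\alpha(\mathcal{P}\|\mathcal{Q})=\frac{1}{\alpha-1}\ln\int p^\alpha q^{1-\alpha}d\mu$ is the Rényi divergence. Logarithms are natural. Measurability of all relevant sets and maps is assumed. *)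

(* Defs.v *)
From HB Require Import structures.
From mathcomp Require Import all_boot all_order all_algebra.
From mathcomp Require Import all_classical all_reals all_analysis.
Set Implicit Arguments. Unset Strict Implicit. Unset Printing Implicit Defensive.
Import Order.TTheory GRing.Theory Num.Theory.
Import numFieldNormedType.Exports.
Local Open Scope classical_set_scope.
Local Open Scope ring_scope.

Section Defs.
Context (R : realType).

(** [Pn] is the n-fold product P^n of [P] on [n.-tuple T]: its value on every
    measurable rectangle is the product of the marginal probabilities (this
    determines the measure uniquely). *)
Definition is_product_measure d (T : measurableType d) (n : nat)
  (P : set T -> \bar R) (Pn : set (n.-tuple T) -> \bar R) : Prop :=
  forall A : 'I_n -> set T, (forall i, measurable (A i)) ->
    Pn [set t | forall i, A i (tnth t i)] = (\prod_(i < n) P (A i))%E.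

Definition joint_law d d' (TS : measurableType d) (TH : measurableType d')
  (PS : set TS -> \bar R) (k : TS -> {measure set TH -> \bar R}) : set (TS * TH) -> \bar R :=
  fun A => (\int[PS]_s k s (xsection A s))%E.

Definition out_law d d' (TS : measurableType d) (TH : measurableType d')
  (PS : set TS -> \bar R) (k : TS -> {measure set TH -> \bar R}) : set TH -> \bar R :=
  fun B => (\int[PS]_s k s B)%E.

Definition is_density d (T : measurableType d) (nu mu : set T -> \bar R)
  (f : T -> R) : Prop :=
  [/\ measurable_fun setT f, (forall x, 0 <= f x) &
      forall A, measurable A -> nu A = (\int[mu]_(x in A) (f x)%:E)%E].

(** Renyi divergence of order a > 1:
    D_a(nu || mu) = 1/(a-1) ln \int (dnu/dmu)^a dmu  if nu << mu, +oo otherwise.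
    (This is the formula (1/(a-1)) ln \int p^a q^(1-a) dmu0 with the dominating
    measure mu0 := mu, q = 1, p = dnu/dmu.)  All densities coincide mu-a.e., so
    the infimum below is over a set with one element, or over the empty set
    (giving +oo) when no density exists. *)
Definition renyi_div d (T : measurableType d) (a : R) (nu mu : set T -> \bar R)
  : \bar R :=
  ereal_inf [set v | exists f, is_density nu mu f /\
     v = ((a - 1)^-1)%:E * lne (\int[mu]_x ((f x) `^ a)%:E)]%E.

Definition sibson_mi d d' (TS : measurableType d) (TH : measurableType d')
  (a : R) (PS : set TS -> \bar R) (PSH : set (TS * TH) -> \bar R) : \bar R :=
  ereal_inf [set v | exists Q : probability TH R,
     v = renyi_div a PSH (product_measure1 PS Q)].

Definition loss01 (H X Y : Type) (ev : H -> X -> Y) (h : H) (z : X * Y) : R :=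
  \1_[set z' : X * Y | ev h z'.1 <> z'.2] z.

Definition pop_risk (H X Y : Type) (ev : H -> X -> Y) (P : set (X * Y) -> \bar R) (h : H) : R :=
  fine (P [set z | ev h z.1 <> z.2]).

Definition emp_risk (H X Y : Type) (n : nat) (ev : H -> X -> Y)
  (s : n.-tuple (X * Y)) (h : H) : R :=
  n%:R^-1 * \sum_(i < n) loss01 ev h (tnth s i).

End Defs.
Arguments emp_risk {R H X Y n}.
Arguments loss01 {R H X Y}.

(* Main.v *)
Require Import Defs.
From HB Require Import structures.
From mathcomp Require Import all_boot all_order all_algebra.
From mathcomp Require Import all_classical all_reals all_analysis.
From mathcomp Require Import ring lra.
From mathcomp Require Import measurable_realfun.
Import Order.TTheory GRing.Theory Num.Theory.
Import numFieldNormedType.Exports.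
Local Open Scope classical_set_scope.
Local Open Scope ring_scope.

Section S.
Variable R : realType.

Lemma mono_of_derive_itv (f df : R -> R) (a b : R) :
  (forall x : R, is_derive x (1:R) f (df x)) -> (forall x, a <= x <= b -> 0 <= df x) ->
  a <= b -> f a <= f b.
Proof.
move=> hd hp ab.
apply: (@ger0_derive1_ndecr R f a b) => //.
- move=> z; rewrite in_itv /= => /andP[az zb].
  rewrite derive1E (@derive_val _ _ _ _ _ _ _ (hd z)).
  by apply: hp; rewrite !ltW.
- apply: continuous_subspaceT => r.
  by apply/differentiable_continuous/derivable1_diffP; exact: (@ex_derive _ _ _ _ _ _ _ (hd r)).
Qed.

Lemma hoeffding_lemma (p l : R) : 0 <= p <= 1 ->
  1 - p + p * expR l <= expR (l * p + l ^+ 2 / 8).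
Proof.
move=> /andP[p0 p1].
pose D (x : R) := 1 - p + p * expR x.
have Dpos x : 0 < D x.
  rewrite /D; have [->|pn1] := eqVneq p 1.
    by rewrite subrr add0r mul1r expR_gt0.
  apply: (@lt_le_trans _ _ (1 - p)); first by rewrite subr_gt0 lt_neqAle pn1.
  by rewrite lerDl mulr_ge0 // expR_ge0.
pose q x := p * expR x / D x.
pose psi x := p + x / 4 - q x.
pose phi x := x * p + x ^+ 2 / 8 - ln (D x).
have dD x : is_derive x (1:R) D (p * expR x).
  rewrite /D; apply: is_derive_eq; by rewrite add0r mul1r.
have dq x : is_derive x (1:R) q (q x * (1 - q x)).
  have h1 : is_derive x (1:R) (fun y => p * expR y) (p * expR x).
    apply: is_derive_eq. reflexivity.
  have h2 := is_deriveV (lt0r_neq0 (Dpos x)) (dD x).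
  have h3 := is_deriveM h1 h2.
  apply: (is_derive_eq h3). rewrite /q /=. have Dn := lt0r_neq0 (Dpos x).
  rewrite [in LHS]/GRing.scale /=.
  by move: (D x) Dn => d dn; field.
have dpsi x : is_derive x (1:R) psi (4^-1 - q x * (1 - q x)).
  rewrite /psi; apply: is_derive_eq.
  rewrite /GRing.scale /=; ring.
have dphi x : is_derive x (1:R) phi (psi x).
  have h := is_derive1_comp (is_derive1_ln (Dpos x)) (dD x).
  rewrite /phi; apply: is_derive_eq.
  rewrite /psi /q /GRing.scale /=.
  by move: (D x) (lt0r_neq0 (Dpos x)) => d dn; field.
have D0 : D 0 = 1 by rewrite /D expR0 mulr1 subrK.
have psi0 : psi 0 = 0 by rewrite /psi /q D0 expR0 mulr1 divr1 mul0r addr0 subrr.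
have phi0 : phi 0 = 0.
  by rewrite /phi D0 ln1 mul0r expr0n /= mul0r add0r subrr.
have dpsi_ge0 x : 0 <= 4^-1 - q x * (1 - q x).
  have -> : 4^-1 - q x * (1 - q x) = (q x - 2^-1) ^+ 2 by field.
  exact: sqr_ge0.
have psi_ge0 x : 0 <= x -> 0 <= psi x.
  move=> x0; have h := @mono_of_derive_itv psi _ 0 x dpsi (fun y _ => dpsi_ge0 y) x0.
  by rewrite psi0 in h.
have psi_le0 x : x <= 0 -> psi x <= 0.
  move=> x0; have h := @mono_of_derive_itv psi _ x 0 dpsi (fun y _ => dpsi_ge0 y) x0.
  by rewrite psi0 in h.
have phi_ge0 : 0 <= phi l.
  have [l0|l0] := leP 0 l.
    have h := @mono_of_derive_itv phi _ 0 l dphi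
      (fun y hy => psi_ge0 y (proj1 (andP hy))) l0.
    by rewrite phi0 in h.
  have dnphi x : is_derive x (1:R) (fun y => - phi y) (- psi x).
    by apply: is_derive_eq.
  have npsi y : l <= y <= 0 -> 0 <= - psi y.
    by move=> /andP[_ y0]; rewrite oppr_ge0 psi_le0.
  have h := @mono_of_derive_itv (fun y => - phi y) _ l 0 dnphi npsi (ltW l0).
  by rewrite /= phi0 oppr0 oppr_le0 in h.
move: phi_ge0; rewrite /phi subr_ge0 => hl.
rewrite -[X in X <= _](@lnK _ (D l)); last by rewrite posrE.
by rewrite ler_expR.
Qed.
End S.

Section S.
Variable R : realType.

Lemma chernoff n (p lam t : R) : 0 <= p <= 1 ->
  \sum_(f : {ffun 'I_n -> bool})
     (if 0 <= lam * (\sum_(i < n) (f i)%:R - t)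
      then \prod_(i < n) (if f i then p else 1 - p) else 0)
  <= expR (- (lam * t) + n%:R * (lam * p + lam ^+ 2 / 8)).
Proof.
move=> hp; have /andP[p0 p1] := hp.
have wi0 (b : bool) : 0 <= (if b then p else 1 - p) by case: b; lra.
have wge0 (f : {ffun 'I_n -> bool}) :
    0 <= \prod_(i < n) (if f i then p else 1 - p).
  by apply: prodr_ge0 => i _.
apply: (@le_trans _ _ (\sum_(f : {ffun 'I_n -> bool})
   (\prod_(i < n) (if f i then p else 1 - p)) *
     expR (lam * (\sum_(i < n) (f i)%:R - t)))).
  apply: ler_sum => f _; case: ifP => h; last by rewrite mulr_ge0 ?expR_ge0.
  rewrite -[X in X <= _]mulr1 ler_wpM2l //.
  by apply: le_trans (expR_ge1Dx _); rewrite lerDl h.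
under eq_bigr => f _ do rewrite mulrBr expRB mulr_sumr expR_sum mulrA
   -big_split /= (mulrC _ (expR (lam * t))^-1).
rewrite -mulr_sumr.
rewrite -(bigA_distr_bigA (fun (i : 'I_n) (b : bool) =>
   (if b then p else 1 - p) * expR (lam * b%:R))) /=.
under eq_bigr => i _ do rewrite big_bool /= mulr1 mulr0 expR0 mulr1.
rewrite prodr_const card_ord expRD expRN.
rewrite ler_pM2l ?invr_gt0 ?expR_gt0 //.
rewrite expRM_natl; apply: lerXn2r.
- by rewrite nnegrE; have := wi0 true; have := expR_ge0 lam; nra.
- by rewrite nnegrE expR_ge0.
by rewrite addrC; exact: hoeffding_lemma.
Qed.

Lemma binom_tail n (p eta : R) : 0 <= p <= 1 -> 0 < eta ->
  \sum_(f : {ffun 'I_n -> bool} | eta < `|p - n%:R^-1 * \sum_(i < n) (f i)%:R|)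
     \prod_(i < n) (if f i then p else 1 - p)
  <= 2 * expR (- (2 * n%:R * eta ^+ 2)).
Proof.
move=> hp eta0; have /andP[p0 p1] := hp.
have wi0 (b : bool) : 0 <= (if b then p else 1 - p) by case: b; lra.
have wge0 (f : {ffun 'I_n -> bool}) :
    0 <= \prod_(i < n) (if f i then p else 1 - p).
  by apply: prodr_ge0 => i _.
have key (f : {ffun 'I_n -> bool}) :
    eta < `|p - n%:R^-1 * \sum_(i < n) (f i)%:R| ->
    (0 <= 4 * eta * (\sum_(i < n) (f i)%:R - n%:R * (p + eta))) ||
    (0 <= - (4 * eta) * (\sum_(i < n) (f i)%:R - n%:R * (p - eta))).
  case: n f {wge0} => [|n'] f.
    by move=> _; rewrite big_ord0 mul0r subrr mulr0 lexx.
  move: (\sum_(i < n'.+1) (f i)%:R) => m.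
  set n := n'.+1.
  have N0 : (0 : R) < n%:R by rewrite ltr0n.
  have mE : m = n%:R * (n%:R^-1 * m) by rewrite mulrA mulfV ?mul1r // gt_eqF.
  rewrite [in X in (X || _)]mE [in X in (_ || X)]mE.
  move: (n%:R^-1 * m) => x.
  rewrite ltr_normr => /orP[h|h].
    apply/orP; right.
    have -> : - (4 * eta) * (n%:R * x - n%:R * (p - eta)) = 4 * eta * n%:R * (p - eta - x) by ring.
    by rewrite !mulr_ge0 ?ltW //; lra.
  apply/orP; left.
  have -> : 4 * eta * (n%:R * x - n%:R * (p + eta)) = 4 * eta * n%:R * (x - p - eta) by ring.
  by rewrite !mulr_ge0 ?ltW //; lra.
pose up (f : {ffun 'I_n -> bool}) :=
  0 <= 4 * eta * (\sum_(i < n) (f i)%:R - n%:R * (p + eta)).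
pose lo (f : {ffun 'I_n -> bool}) :=
  0 <= - (4 * eta) * (\sum_(i < n) (f i)%:R - n%:R * (p - eta)).
apply: (@le_trans _ _
  (\sum_(f : {ffun 'I_n -> bool}) (if up f then \prod_(i < n) (if f i then p else 1 - p) else 0) +
   \sum_(f : {ffun 'I_n -> bool}) (if lo f then \prod_(i < n) (if f i then p else 1 - p) else 0))).
  rewrite big_mkcond -big_split /=; apply: ler_sum => f _.
  case: ifP => bad.
    have := key f bad; rewrite -/(up f) -/(lo f).
    case: (up f) => /=; case: (lo f) => //= _; rewrite ?addr0 ?add0r //.
    by rewrite lerDl.
  by apply: addr_ge0; case: ifP.
have e1 := @chernoff n p (4 * eta) (n%:R * (p + eta)) hp.
have e2 := @chernoff n p (- (4 * eta)) (n%:R * (p - eta)) hp.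
have E1 : - (4 * eta * (n%:R * (p + eta))) + n%:R * (4 * eta * p + (4 * eta) ^+ 2 / 8)
   = - (2 * n%:R * eta ^+ 2) by field.
have E2 : - (- (4 * eta) * (n%:R * (p - eta))) + n%:R * (- (4 * eta) * p + (- (4 * eta)) ^+ 2 / 8)
   = - (2 * n%:R * eta ^+ 2) by field.
rewrite E1 in e1; rewrite E2 in e2.
by rewrite mulr2n mulrDl mul1r lerD.
Qed.
End S.

Section S.
Variable R : realType.

Lemma rect_measurable d (Z : measurableType d) n (A : 'I_n -> set Z) :
  (forall i, measurable (A i)) ->
  measurable [set t : n.-tuple Z | forall i, A i (tnth t i)].
Proof.
move=> mA.
have h (s : seq 'I_n) : measurable [set t : n.-tuple Z | forall i, i \in s -> A i (tnth t i)].
  elim: s => [|j s ih].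
    have -> : [set t : n.-tuple Z | forall i, i \in [::] -> A i (tnth t i)] = setT.
      by apply/seteqP; split => t //= _ i.
    exact: measurableT.
  have -> : [set t : n.-tuple Z | forall i, i \in j :: s -> A i (tnth t i)] =
     ((fun t => tnth t j) @^-1` A j) `&` [set t : n.-tuple Z | forall i, i \in s -> A i (tnth t i)].
    apply/seteqP; split => t /=.
      by move=> H; split; [apply: H; rewrite mem_head|move=> i hs; apply: H; rewrite in_cons hs orbT].
    by move=> [H1 H2] i; rewrite in_cons => /orP[/eqP ->//|/H2].
  apply: measurableI => //.
  rewrite -[X in measurable X]setTI; exact: measurable_tnth.
have -> : [set t : n.-tuple Z | forall i, A i (tnth t i)] =
   [set t : n.-tuple Z | forall i, i \in enum 'I_n -> A i (tnth t i)].
  by apply/seteqP; split => t /= H i; [move=> _; apply: H|apply: H; rewrite mem_enum].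
exact: h.
Qed.

Lemma tail_measure d (Z : measurableType d) n (P : probability Z R)
  (Pn : probability (n.-tuple Z) R) (B : set Z) (eta : R) :
  is_product_measure P Pn -> measurable B -> 0 < eta ->
  (Pn [set s | (eta < `|fine (P B) - n%:R^-1 * \sum_(i < n) \1_B (tnth s i)|)%R]
    <= (2 * expR (- (2 * n%:R * eta ^+ 2)))%:E)%E.
Proof.
move=> prodP mB eta0.
pose pb := fine (P B).
have PB : P B = pb%:E by rewrite /pb fineK ?fin_num_measure.
have PC : P (~` B) = (1 - pb)%:E.
  by rewrite probability_setC // /pb EFinB fineK ?fin_num_measure.
have pb01 : 0 <= pb <= 1.
  rewrite /pb; apply/andP; split; first by apply: fine_ge0; exact: measure_ge0.
  by rewrite -lee_fin fineK ?fin_num_measure //; exact: probability_le1.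
pose A (f : {ffun 'I_n -> bool}) i := if f i then B else ~` B.
have mA f i : measurable (A f i) by rewrite /A; case: (f i) => //; exact: measurableC.
pose Rect f := [set s : n.-tuple Z | forall i, A f i (tnth s i)].
have mRect f : measurable (Rect f) by apply: rect_measurable.
have PRect f : Pn (Rect f) = (\prod_(i < n) (if f i then pb else 1 - pb))%:E.
  rewrite /Rect prodP // -prodEFin; apply: eq_bigr => i _.
  by rewrite /A; case: (f i).
pose pat (s : n.-tuple Z) := [ffun i => `[< B (tnth s i) >]].
pose bad (f : {ffun 'I_n -> bool}) :=
  eta < `|pb - n%:R^-1 * \sum_(i < n) (f i)%:R|.
have indE s i : \1_B (tnth s i) = (pat s i)%:R :> R.
  by rewrite indicE ffunE /=.
have patRect s : Rect (pat s) s.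
  move=> i; rewrite /A ffunE; case: asboolP => //.
have Rectpat f s : Rect f s -> pat s = f.
  move=> h; apply/ffunP => i; rewrite ffunE; have := h i; rewrite /A.
  by case: (f i) => hi; apply/asboolP.
have SE : [set s | eta < `|pb - n%:R^-1 * \sum_(i < n) \1_B (tnth s i)|] =
    \bigcup_(f in [set f | bad f]) Rect f.
  apply/seteqP; split => s /=.
    move=> h; exists (pat s); last exact: patRect.
    rewrite /= /bad.
    by under eq_bigr => i _ do rewrite -indE.
  move=> [f bf /Rectpat hf]; under eq_bigr => i _ do rewrite indE.
  by rewrite hf; exact: bf.
have tR : trivIset [set f | bad f] Rect.
  move=> f g _ _ [s [/Rectpat hf /Rectpat hg]]; by rewrite -hf -hg.
rewrite SE measure_fin_bigcup //; last exact: finite_finset.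
rewrite (_ : (\sum_(f \in _) _ = \sum_(f \in [set f | bad f])
   (\prod_(i < n) (if f i then pb else 1 - pb))%:E)%E); last first.
  by apply: eq_fsbigr => f _; exact: PRect.
rewrite fsumEFin; last exact: finite_finset.
rewrite lee_fin.
rewrite fsbig_mkcond (fsbigE (index_enum _)) ?index_enum_uniq //; last first.
  by move=> i _; rewrite mem_index_enum.
apply: (le_trans _ (@binom_tail R n pb eta pb01 eta0)).
rewrite [leLHS]big_mkcond [leRHS]big_mkcond /=; apply: ler_sum => f _.
rewrite in_setT /patch /=.
by rewrite mem_setE.
Qed.
End S.

Section S.
Variable R : realType.
Local Open Scope ereal_scope.

Lemma density_bound d (T : measurableType d) (mu : {measure set T -> \bar R})
  (nu : set T -> \bar R) (f : T -> R) (E : set T) (a c : R) :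
  is_density nu mu f -> measurable E -> (1 < a)%R -> (0 < c)%R -> mu E <= c%:E ->
  nu E <= (\int[mu]_x ((f x) `^ a)%:E) `^ (a^-1) * (c `^ ((a - 1) / a))%:E.
Proof.
move=> [mf f0 nuE] mE a1 c0 muE.
have a0 : (0 < a)%R by apply: lt_trans a1.
pose q := (a / (a - 1))%R.
have a10 : (0 < a - 1)%R by rewrite subr_gt0.
have q0 : (0 < q)%R by rewrite divr_gt0.
have pq : (a^-1 + q^-1 = 1)%R.
  by rewrite /q invf_div; field; rewrite gt_eqF.
have mI : measurable_fun setT (\1_E : T -> R) by apply/measurable_indicP.
have H := hoelder mu mf mI a0 q0 pq.
rewrite Lnorm1 in H.
have LHS : \int[mu]_x `|(EFin \o (f \* \1_E)%R) x| = nu E.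
  rewrite nuE // [RHS]integral_mkcond; apply: eq_integral => x _.
  rewrite /patch /= indicE; case: (x \in E) => /=.
    by rewrite mulr1 ger0_norm.
  by rewrite mulr0 normr0.
rewrite LHS in H; apply: (le_trans H).
have N1 : Lnorm mu a%:E (EFin \o f) = (\int[mu]_x ((f x) `^ a)%:E) `^ (a^-1).
  rewrite unlock /=; congr (_ `^ _); apply: eq_integral => x _.
  by rewrite /= ger0_norm // poweR_EFin.
have N2 : Lnorm mu q%:E (EFin \o \1_E) = mu E `^ (q^-1).
  rewrite unlock /=; congr (_ `^ _).
  rewrite -[in RHS](setIT E) -integral_indic //; apply: eq_integral => x _.
  rewrite /= indicE; case: (x \in E) => /=.
    by rewrite normr1 powR1.
  by rewrite normr0 powR0 // gt_eqF.
rewrite N1 N2; apply: lee_wpmul2l; first exact: poweR_ge0.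
have -> : ((a - 1) / a = q^-1)%R by rewrite /q invf_div.
rewrite -poweR_EFin; apply: gt0_ler_poweR => //.
- by rewrite invr_ge0 ltW.
- by rewrite in_itv /= measure_ge0 leey.
- by rewrite in_itv /= lee_fin ltW // leey.
Qed.
End S.

Section S.
Variable R : realType.
Local Open Scope ereal_scope.

Lemma fubini_bound d1 d2 (T1 : measurableType d1) (T2 : measurableType d2)
  (P1 : probability T1 R) (Q : probability T2 R) (E : set (T1 * T2)) (c : R) :
  (0 <= c)%R -> measurable E -> (forall y, P1 (ysection E y) <= c%:E) ->
  product_measure1 P1 Q E <= c%:E.
Proof.
move=> c0 mE hc.
have h := indic_fubini_tonelli P1 Q mE.
rewrite indic_fubini_tonelli_FE // indic_fubini_tonelli_GE // in h.
rewrite /product_measure1 h.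
apply: (@le_trans _ _ (\int[Q]_y (cst c%:E) y)).
  apply: ge0_le_integral => //.
  all: try (by move=> y _; exact: measure_ge0).
  - exact: measurable_fun_ysection.
  - by move=> y _ /=; exact: hc.
rewrite integral_cst // -[leRHS]mule1; apply: lee_wpmul2l.
  by rewrite lee_fin.
exact: probability_le1.
Qed.
End S.

Section S.
Variable R : realType.
Local Open Scope ereal_scope.

Lemma inf_bound (y K : \bar R) (th : R) (S : set (\bar R)) :
  (0 < th)%R -> K \is a fin_num -> 0 <= y ->
  (forall v, S v -> y <= expeR (th%:E * (v + K))) ->
  y <= expeR (th%:E * (ereal_inf S + K)).
Proof.
move=> th0 Kf y0 hS.
pose L := th^-1%:E * lne y - K.
have key z : (y <= expeR (th%:E * (z + K))) = (L <= z).
  rewrite -lee_lne; first last.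
  - by rewrite in_itv /= expeR_ge0 leey.
  - by rewrite in_itv /= y0 leey.
  by rewrite expeRK /L leeBlDr // lee_pdivrMl.
rewrite key; apply: le_ereal_inf_tmp => v Sv; rewrite -key; exact: hS.
Qed.
End S.

Theorem corollary4 (R : realType)
  (dX dY dH : measure_display)
  (X : measurableType dX) (Y : measurableType dY) (H : measurableType dH)
  (ev : H -> X -> Y) (n : nat)
  (P : probability (X * Y)%type R)
  (Pn : probability (n.-tuple (X * Y)%type) R)
  (k : R.-pker (n.-tuple (X * Y)%type) ~> H)
  (eta alpha : R) :
  is_product_measure P Pn ->
  measurable [set p : H * (X * Y) | ev p.1 p.2.1 <> p.2.2] ->
  joint_law Pn k `<< product_measure1 Pn (out_law Pn k) ->
  0 < eta < 1 ->
  let E := [set p : n.-tuple (X * Y) * H |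
              `|pop_risk ev P p.2 - emp_risk ev p.1 p.2| > eta] in
  measurable E ->
  1 < alpha ->
  (joint_law Pn k E <=
    expeR (((alpha - 1) / alpha)%:E *
      (sibson_mi alpha Pn (joint_law Pn k) + (ln 2)%:E
        - (2 * n%:R * eta ^+ 2)%:E)))%E.
Proof.
move=> prodP mSB _ /andP[eta0 eta1] E mE alpha1.
set PSH := joint_law Pn k.
pose c := 2 * expR (- (2 * n%:R * eta ^+ 2)).
have c0 : 0 < c by rewrite mulr_gt0 ?expR_gt0.
have lnc : ln c = ln 2 - 2 * n%:R * eta ^+ 2.
  by rewrite /c lnM ?posrE ?expR_gt0 // expRK.
have hA h : (Pn (ysection E h) <= c%:E)%E.
  have mB : measurable [set z : X * Y | ev h z.1 <> z.2].
    have -> : [set z : X * Y | ev h z.1 <> z.2] =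
        xsection [set p : H * (X * Y) | ev p.1 p.2.1 <> p.2.2] h.
      by apply/seteqP; split => z; rewrite /xsection /= in_setE.
    exact: measurable_xsection.
  have -> : ysection E h = [set s | (eta < `|fine (P [set z : X * Y | ev h z.1 <> z.2])
       - n%:R^-1 * \sum_(i < n) \1_[set z : X * Y | ev h z.1 <> z.2] (tnth s i)|)%R].
    by apply/seteqP; split => s; rewrite /ysection /= in_setE.
  exact: (@tail_measure R _ _ n P Pn _ eta prodP mB eta0).
have hB (Q : probability H R) : (product_measure1 Pn Q E <= c%:E)%E.
  exact: (@fubini_bound R _ _ _ _ Pn Q E c (ltW c0) mE hA).
have th0 : 0 < (alpha - 1) / alpha.
  by rewrite divr_gt0 // ?subr_gt0 // (lt_trans _ alpha1).
have a0 : 0 < alpha by apply: lt_trans alpha1.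
have PSH0 : (0 <= PSH E)%E.
  by apply: integral_ge0 => s _; exact: measure_ge0.
have hC (Q : probability H R) (f : n.-tuple (X * Y) * H -> R) :
    is_density PSH (product_measure1 Pn Q) f ->
    (PSH E <= expeR (((alpha - 1) / alpha)%:E *
      (((alpha - 1)^-1)%:E * lne (\int[product_measure1 Pn Q]_x ((f x) `^ alpha)%:E)
        + (ln c)%:E)))%E.
  move=> hf.
  have hd := @density_bound R _ _ (product_measure1 Pn Q) PSH f E alpha c hf mE alpha1 c0 (hB Q).
  have I0 : (0 <= \int[product_measure1 Pn Q]_x ((f x) `^ alpha)%:E)%E.
    by apply: integral_ge0 => x _; rewrite lee_fin powR_ge0.
  move: I0 hd; case: (\int[product_measure1 Pn Q]_x ((f x) `^ alpha)%:E)%E => [r| |] //.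
  - rewrite lee_fin le_eqVlt => /orP[/eqP <-|r0] hd.
      by apply: le_trans hd _; rewrite poweR0r ?invr_neq0 ?gt_eqF // mul0e expeR_ge0.
    apply: le_trans hd _.
    rewrite lne_EFin // poweR_EFin -!EFinM /= lee_fin.
    rewrite /powR !gt_eqF // -expRD ler_expR le_eqVlt; apply/orP; left; apply/eqP.
    by field; rewrite ?gt_eqF // subr_gt0.
  - move=> _ _.
    rewrite gt0_muley ?lte_fin ?invr_gt0 ?subr_gt0 // addye //.
    by rewrite gt0_muley ?lte_fin //= leey.
rewrite -addeA -EFinB -lnc.
apply: inf_bound => //.
move=> v [Q ->]; rewrite /renyi_div.
apply: inf_bound => //.
move=> w [f [hf ->]]; exact: hC.
Qed.
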